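(* Let $M$ and $M'$ be two stable matchings in an instance $I$ of SPA-S, and let $M^\land$ be the assignment defined from $M,M'$ in the context. Then $M^\land$ is a matching.
   Context: An instance $I$ of SPA-S consists of a finite set $\mathcal{S}$ of students, a finite set $\mathcal{P}$ of projects and a finite set $\mathcal{L}$ of lecturers. Each student $s_i$ ranks a subset $A_i\subseteq\mathcal{P}$ (its acceptable projects) in strict order. Each project is offered by exactly one lecturer; lecturer $l_k$ offers a nonempty set $P_k\subseteq\mathcal{P}$, the $P_k$ partitioning $\mathcal{P}$. Each lecturer $l_k$ ranks in strict order the students who find at least one project of $P_k$ acceptable. Projects have capacities $c_j\in\mathbb{Z}^+$, lecturers have capacities $d_k\in\mathbb{Z}^+$ with $\max\{c_j:p_j\in P_k\}\le d_k\le\sum\{c_j:p_j\in P_k\}$. A pair $(s_i,p_j)$, $p_j$ offered by $l_k$, is acceptable if $p_j\in A_i$ and $s_i$ is on $l_k$'s list. A matching $M$ is a set of acceptable pairs with each student in at most one pair, $|M(p_j)|\le c_j$, $|M(l_k)|\le d_k$, where for an assignment $M$ (a set of acceptable pairs), $M(s_i)$, $M(p_j)$, $M(l_k)$ denote the project of $s_i$, the students assigned to $p_j$, and the students assigned to projects of $l_k$. Undersubscribed/full means fewer than/exactly capacity many assigned students. An acceptable pair $(s_i,p_j)\notin M$ ($p_j$ offered by $l_k$) blocks $M$ if ($s_i$ is unassigned or prefers $p_j$ to $M(s_i)$) and one of: (P1) $p_j$ and $l_k$ undersubscribed; (P2) $p_j$ undersubscribed, $l_k$ full, $s_i\in M(l_k)$;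 (P3) $p_j$ undersubscribed, $l_k$ full, $l_k$ prefers $s_i$ to the worst student of $M(l_k)$; (P4) $p_j$ full and $l_k$ prefers $s_i$ to the worst student of $M(p_j)$. $M$ is stable if it has no blocking pair. Given stable matchings $M,M'$, $M^\land$ is the assignment in which each student unassigned in both $M$ and $M'$ is unassigned, each student assigned to the same project in both is assigned to that project, and every other student is assigned to the better (in her preference) of her projects in $M$ and $M'$. *)

(* Defs.v *)
From mathcomp Require Import all_boot.
Set Implicit Arguments. Unset Strict Implicit. Unset Printing Implicit Defensive.

Section SPAS.
Variables (S P L : finType). (* students, projects, lecturers *)

(* An SPA-S instance.  Strict preference lists are given by rank functions
   (smaller rank = more preferred), required injective on the list in
   [wf_instance]. *)
Record instance := Instance {
  sacc  : S -> P -> bool;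
  srank : S -> P -> nat;
  offer : P -> L;
  lrank : L -> S -> nat;
  cap_p : P -> nat;
  cap_l : L -> nat
}.

Variable I : instance.

Definition on_list (l : L) (s : S) : bool :=
  [exists p, sacc I s p && (offer I p == l)].

Definition offered (l : L) : {set P} := [set p | offer I p == l].

Definition wf_instance : Prop :=
  [/\ (forall s p q, sacc I s p -> sacc I s q -> srank I s p = srank I s q -> p = q),
      (forall l s t, on_list l s -> on_list l t -> lrank I l s = lrank I l t -> s = t),
      (forall l, offered l != set0),
      ((forall p, 0 < cap_p I p) /\ (forall l, 0 < cap_l I l)) &
      (forall l, (\max_(p in offered l) cap_p I p <= cap_l I l)
                 /\ (cap_l I l <= \sum_(p in offered l) cap_p I p))].

Definition acceptable (s : S) (p : P) : bool :=
  sacc I s p && on_list (offer I p) s.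

Definition sprefers (s : S) (p q : P) : bool := srank I s p < srank I s q.
Definition lprefers (l : L) (s t : S) : bool := lrank I l s < lrank I l t.

Definition assignment := S -> option P.

Definition Mp (M : assignment) (p : P) : {set S} := [set s | M s == Some p].
Definition Ml (M : assignment) (l : L) : {set S} :=
  [set s | if M s is Some p then offer I p == l else false].

Definition is_matching (M : assignment) : Prop :=
  [/\ (forall s p, M s = Some p -> acceptable s p),
      (forall p, #|Mp M p| <= cap_p I p) &
      (forall l, #|Ml M l| <= cap_l I l)].

Definition p_under M p := #|Mp M p| < cap_p I p.
Definition p_full  M p := #|Mp M p| == cap_p I p.
Definition l_under M l := #|Ml M l| < cap_l I l.
Definition l_full  M l := #|Ml M l| == cap_l I l.

(* "l prefers s to the worst student of X" (X nonempty) is equivalent to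
   s being preferred to some member of X. *)
Definition prefers_to_worst (l : L) (s : S) (X : {set S}) : bool :=
  [exists t in X, lprefers l s t].

Definition blocks (M : assignment) (s : S) (p : P) : bool :=
  let l := offer I p in
  [&& acceptable s p, M s != Some p,
      (if M s is Some q then sprefers s p q else true) &
      [|| p_under M p && l_under M l
        , [&& p_under M p, l_full M l & s \in Ml M l]
        , [&& p_under M p, l_full M l & prefers_to_worst l s (Ml M l)]
        | p_full M p && prefers_to_worst l s (Mp M p)]].

Definition stable (M : assignment) : Prop :=
  is_matching M /\ forall s p, ~~ blocks M s p.

Definition meet (M M' : assignment) : assignment := fun s =>
  match M s, M' s with
  | None, None => None
  | Some p, None => Some p
  | None, Some q => Some q
  | Some p, Some q => if sprefers s q p then Some q else Some p
  end.

End SPAS.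

(* Main.v *)
Require Import Defs.
From mathcomp Require Import all_boot.

Lemma card_Ml (S P L : finType) (I : instance S P L) (A : assignment S P) l (p0 : P) :
  #|Ml I A l| = \sum_(p | offer I p == l) #|Mp A p|.
Proof.
rewrite -sum1_card (partition_big (fun s => odflt p0 (A s)) (fun p => offer I p == l)).
  apply: eq_bigr => p Hp; rewrite -sum1_card; apply: eq_bigl => s.
  rewrite !inE; case: (A s) => [q|] //=.
  by case: (q =P p) => [->|hq]; [rewrite Hp eqxx | rewrite andbF; apply/esym/eqP => -[]].
by move=> s; rewrite inE; case: (A s).
Qed.

Lemma nb_gen (S P L : finType) (I : instance S P L) (N : assignment S P) s p :
  is_matching I N -> ~~ blocks I N s p -> acceptable I s p -> N s != Some p ->
  (match N s with Some q => is_true (sprefers I s p q) | None => is_true true end) ->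
  (forall u, u \in Mp N p -> lrank I (offer I p) u <= lrank I (offer I p) s) /\
  (#|Mp N p| < cap_p I p -> s \notin Ml I N (offer I p) /\
     forall u, u \in Ml I N (offer I p) -> lrank I (offer I p) u <= lrank I (offer I p) s).
Proof.
move=> [_ hcp hcl] hb hacc hne hpref0.
have hpref : (if N s is Some q then sprefers I s p q else true) = true by move: hpref0; case: (N s).
move: hb; rewrite /blocks hacc hne hpref /=.
rewrite /p_under /l_under /p_full /l_full /prefers_to_worst.
set l := offer I p.
move=> /norP [h1 /norP [h2 /norP [h3 h4]]].
have lfull : #|Mp N p| < cap_p I p -> #|Ml I N l| == cap_l I l.
  move=> hu; move: h1; rewrite hu /= -leqNgt => h.
  by rewrite eqn_leq h hcl.
have worstl : #|Mp N p| < cap_p I p ->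
   forall u, u \in Ml I N l -> lrank I l u <= lrank I l s.
  move=> hu u hu'; move: h3; rewrite hu lfull //= => /existsPn /(_ u).
  by rewrite hu' /= /lprefers -leqNgt.
split.
  move=> u hu.
  have [hlt|hge] := ltnP #|Mp N p| (cap_p I p).
    apply: worstl => //; move: hu; rewrite !inE => /eqP ->; exact: eqxx.
  have hf : #|Mp N p| == cap_p I p by rewrite eqn_leq hge hcp.
  by move: h4; rewrite hf /= => /existsPn /(_ u); rewrite hu /= /lprefers -leqNgt.
move=> hu; split; last exact: worstl.
by move: h2; rewrite hu lfull.
Qed.

Arguments nb_gen {S P L I N s p}.
Arguments card_Ml {S P L} I A l p0.

Lemma pick (S P : finType) (X N N' : assignment S P) (pref : S -> Prop) p :
  (forall s, X s = Some p -> N s != Some p -> N' s = Some p /\ pref s) ->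
  #|Mp N p| < #|Mp X p| ->
  exists s, [/\ N s != Some p, N' s = Some p & pref s].
Proof.
move=> hK hlt.
have hns : ~~ (Mp X p \subset Mp N p).
  by apply/negP => /subset_leq_card; rewrite leqNgt hlt.
case/subsetPn: hns => s; rewrite !inE => /eqP hX hN.
have [h1 h2] := hK s hX hN; by exists s.
Qed.

Theorem lemma7 (S P L : finType) (I : instance S P L) (M M' : assignment S P) :
  wf_instance I -> stable I M -> stable I M' -> is_matching I (meet I M M').
Proof.
move=> wf [mM nbM] [mM' nbM'].
have [mA mP mL] := mM. have [mA' mP' mL'] := mM'.
have wf0 := wf; case: wf0 => hsinj hinj _ _ _.
set X := meet I M M'.
have K1 : forall s p, X s = Some p -> M s = Some p \/ M' s = Some p.
  move=> s p; rewrite /X /meet.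
  case: (M s) => [a|]; case: (M' s) => [b|] //; try by move=> ->; auto.
  by case: ifP => _ ->; auto.
have K2 : forall p s, X s = Some p -> M s != Some p ->
   M' s = Some p /\ (if M s is Some q then sprefers I s p q else true).
  move=> p s; rewrite /X /meet.
  case: (M s) => [a|]; case: (M' s) => [b|] //.
  - by case: ifP => hab [<-]; rewrite ?eqxx // => _; split.
  - by move=> [<-]; rewrite eqxx.
have K3 : forall p s, X s = Some p -> M' s != Some p ->
   M s = Some p /\ (if M' s is Some q then sprefers I s p q else true).
  move=> p s; rewrite /X /meet.
  case hMs: (M s) => [a|]; case hM's: (M' s) => [b|] //.
  - case: ifP => hab [<-]; first by rewrite eqxx.
    move=> hba; split => //.
    have /andP [ha _] := mA s a hMs.
    have /andP [hb _] := mA' s b hM's.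
    move: hab; rewrite /sprefers => /negbT; rewrite -leqNgt => hle.
    rewrite ltn_neqAle hle andbT; apply/negP => /eqP e; have eab := hsinj s a b ha hb e.
    by move: hba; rewrite eab eqxx.
  - by move=> [<-]; rewrite eqxx.
have projb : forall p, #|Mp X p| <= cap_p I p.
  move=> p; rewrite leqNgt; apply/negP => hgt.
  have [s [hs1 hs2 hs3]] := @pick _ _ X M M' (fun s => if M s is Some q then sprefers I s p q else true) p (K2 p)
     (leq_ltn_trans (mP p) hgt).
  have [t [ht1 ht2 ht3]] := @pick _ _ X M' M (fun s => if M' s is Some q then sprefers I s p q else true) p (K3 p)
     (leq_ltn_trans (mP' p) hgt).
  have acs := mA' s p hs2.
  have act := mA t p ht2.
  have [H1 _] := nb_gen mM (nbM s p) acs hs1 hs3.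
  have [H1' _] := nb_gen mM' (nbM' t p) act ht1 ht3.
  have a : lrank I (offer I p) t <= lrank I (offer I p) s by apply: H1; rewrite inE ht2.
  have b : lrank I (offer I p) s <= lrank I (offer I p) t by apply: H1'; rewrite inE hs2.
  have st : s = t.
    apply: (hinj (offer I p)).
    - by case/andP: acs.
    - by case/andP: act.
    - by apply/eqP; rewrite eqn_leq a b.
  by move: hs1; rewrite st ht2 eqxx.
split.
- move=> s p hX; case: (K1 s p hX) => h; [exact: mA s p h | exact: mA' s p h].
- exact: projb.
move=> l; rewrite leqNgt; apply/negP => hgt.
have /card_gt0P [s0 hs0] : 0 < #|Ml I X l| by exact: leq_ltn_trans (leq0n _) hgt.
move: hs0; rewrite inE; case: (X s0) => [p0 _|//].
have pickp : forall N, is_matching I N -> exists p, offer I p == l /\ #|Mp N p| < #|Mp X p|.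
  move=> N mN.
  have h : #|Ml I N l| < #|Ml I X l| by case: mN => _ _ h3; exact: leq_ltn_trans (h3 l) hgt.
  move: h; rewrite (card_Ml I N l p0) (card_Ml I X l p0) => h.
  case: (boolP [exists p, (offer I p == l) && (#|Mp N p| < #|Mp X p|)]).
    by case/existsP => p /andP [h1 h2]; exists p.
  move/existsPn => H; exfalso; move: h; rewrite ltnNge leq_sum //.
  by move=> p hp; move: (H p); rewrite hp /= -leqNgt.
have [p [hpl hp]] := pickp M mM.
have [p' [hpl' hp']] := pickp M' mM'.
have [s [hs1 hs2 hs3]] := @pick _ _ X M M' (fun s => if M s is Some q then sprefers I s p q else true) p (K2 p) hp.
have [t [ht1 ht2 ht3]] := @pick _ _ X M' M (fun s => if M' s is Some q then sprefers I s p' q else true) p' (K3 p') hp'.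
have acs := mA' s p hs2.
have act := mA t p' ht2.
have [_ H2] := nb_gen mM (nbM s p) acs hs1 hs3.
have [_ H2'] := nb_gen mM' (nbM' t p') act ht1 ht3.
have [sn a] := H2 (leq_trans hp (projb p)).
have [tn b] := H2' (leq_trans hp' (projb p')).
move: sn a tn b; rewrite (eqP hpl) (eqP hpl') => sn a tn b.
have tin : t \in Ml I M l by rewrite inE ht2.
have sin : s \in Ml I M' l by rewrite inE hs2.
have st : s = t.
  apply: (hinj l).
  - by case/andP: acs; rewrite (eqP hpl).
  - by case/andP: act; rewrite (eqP hpl').
  - by apply/eqP; rewrite eqn_leq (a t tin) (b s sin).
by move: sn; rewrite st tin.
Qed.
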